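(* Let $n,m,l,N\in\mathbb{N}_{>0}$ and let $\mathcal{M}=\{A_1,\dots,A_m\}\subset\mathbb{R}^{n\times n}$. Let $\omega_N=\{(x_{i},j_{i,1},\dots,j_{i,l}) : 1\le i\le N\}\subset \mathbb{S}\times\{1,\dots,m\}^l$ be a sample (drawn uniformly), and for $\mathbf{j}=(j_1,\dots,j_l)$ write $\mathbf{A_j}:=A_{j_l}A_{j_{l-1}}\cdots A_{j_1}$. Let $\gamma^*(\omega_N)$ be the optimal value of the optimization problem $$\min_{\gamma,P}\ \gamma\quad\text{s.t.}\quad (\mathbf{A_j}x)^TP\,\mathbf{A_j}x\le \gamma^{2l}x^TPx\ \ \forall (x,\mathbf{j})\in\omega_N,\qquad P\succ 0,\ \gamma\ge 0,$$ over $\gamma\in\mathbb{R}$ and symmetric $P\in\mathbb{R}^{n\times n}$. Then $$\rho(\mathcal{M})\ \ge\ \frac{\gamma^*(\omega_N)}{\sqrt[2l]{n}}.$$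
   Context: $\mathbb{S}$ denotes the Euclidean unit sphere in $\mathbb{R}^n$. For a finite set $\mathcal{M}\subset\mathbb{R}^{n\times n}$, the joint spectral radius is $\rho(\mathcal{M})=\lim_{k\to\infty}\max\{\|A_{i_1}\cdots A_{i_k}\|^{1/k}: A_{i_j}\in\mathcal{M}\}$. Note the optimization problem only requires the pairs $(x,\mathbf{A_j}x)$, i.e. observed trajectories of length $l$ of the switched system $x_{k+1}=A_{\tau(k)}x_k$. *)

(* Defs.v *)
From HB Require Import structures.
From mathcomp Require Import all_boot all_order all_algebra.
From mathcomp Require Import all_classical all_reals all_analysis.
Set Implicit Arguments. Unset Strict Implicit. Unset Printing Implicit Defensive.
Import Order.TTheory GRing.Theory Num.Theory.
Import numFieldNormedType.Exports.
Local Open Scope classical_set_scope.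
Local Open Scope ring_scope.

Definition vnorm {R : realType} {n : nat} (x : 'cV[R]_n) : R :=
  Num.sqrt (\sum_(i < n) x i 0 ^+ 2).

Definition sphere {R : realType} (n : nat) : set 'cV[R]_n :=
  [set x | vnorm x = 1].

Definition opnorm {R : realType} {n : nat} (A : 'M[R]_n) : R :=
  sup ((fun x : 'cV[R]_n => vnorm (A *m x)) @` @sphere R n).

(* A_j := A_{j_l} A_{j_(l-1)} ... A_{j_1} for j = (j_1,...,j_l). *)
Definition prodA {R : realType} {n m l : nat} (A : 'I_m -> 'M[R]_n)
  (j : 'I_l -> 'I_m) : 'M[R]_n :=
  \prod_(i < l) A (j (rev_ord i)).

Definition jsr_seq {R : realType} {n m : nat} (A : 'I_m -> 'M[R]_n) (k : nat) : R :=
  \big[Num.max/0]_(j : {ffun 'I_k.+1 -> 'I_m})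
     (opnorm (prodA A j) `^ (k.+1%:R)^-1).

Definition jsr {R : realType} {n m : nat} (A : 'I_m -> 'M[R]_n) : R :=
  limn (jsr_seq A).

Definition qform {R : realType} {n : nat} (P : 'M[R]_n) (x : 'cV[R]_n) : R :=
  (x^T *m P *m x) 0 0.

Definition posdef {R : realType} {n : nat} (P : 'M[R]_n) : Prop :=
  P^T = P /\ forall x : 'cV[R]_n, x != 0 -> 0 < qform P x.

Definition feasible {R : realType} {n m l N : nat} (A : 'I_m -> 'M[R]_n)
  (xs : 'I_N -> 'cV[R]_n) (js : 'I_N -> ('I_l -> 'I_m)) (g : R) : Prop :=
  0 <= g /\ exists P : 'M[R]_n, posdef P /\
    forall i : 'I_N,
      qform P (prodA A (js i) *m xs i) <= g ^+ (2 * l) * qform P (xs i).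

Definition gamma_star {R : realType} {n m l N : nat} (A : 'I_m -> 'M[R]_n)
  (xs : 'I_N -> 'cV[R]_n) (js : 'I_N -> ('I_l -> 'I_m)) : R :=
  inf [set g | feasible A xs js g].

(* Main.v *)
Require Import Defs.
From HB Require Import structures.
From mathcomp Require Import all_boot all_order all_algebra.
From mathcomp Require Import all_classical all_reals all_analysis.
Import Order.TTheory GRing.Theory Num.Theory.
Local Open Scope classical_set_scope.
Local Open Scope ring_scope.
From mathcomp Require Import ring lra zify.
Set Implicit Arguments. Unset Strict Implicit. Unset Printing Implicit Defensive.
Section Vec.
Variables (R : realType) (n : nat).
Implicit Types (x y z : 'cV[R]_n) (a b : R).

Definition dot x y : R := \sum_(i < n) x i 0 * y i 0.

Lemma dotC x y : dot x y = dot y x.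
Proof. by apply: eq_bigr => i _; rewrite mulrC. Qed.
Lemma dotDl x y z : dot (x + y) z = dot x z + dot y z.
Proof. by rewrite /dot -big_split; apply: eq_bigr => i _; rewrite !mxE mulrDl. Qed.
Lemma dotZl a x y : dot (a *: x) y = a * dot x y.
Proof. by rewrite /dot mulr_sumr; apply: eq_bigr => i _; rewrite !mxE mulrA. Qed.
Lemma dotNl x y : dot (- x) y = - dot x y.
Proof. by rewrite -scaleN1r dotZl mulN1r. Qed.
Lemma dotDr x y z : dot z (x + y) = dot z x + dot z y.
Proof. by rewrite dotC dotDl !(dotC z). Qed.
Lemma dotZr a x y : dot y (a *: x) = a * dot y x.
Proof. by rewrite dotC dotZl dotC. Qed.
Lemma dotNr x y : dot y (- x) = - dot y x.
Proof. by rewrite dotC dotNl dotC. Qed.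
Lemma dot_ge0 x : 0 <= dot x x.
Proof. by apply: sumr_ge0 => i _; rewrite -expr2 sqr_ge0. Qed.
Lemma dot0l x : dot 0 x = 0.
Proof. by rewrite /dot big1 // => i _; rewrite mxE mul0r. Qed.

Lemma dot_eq0 x : dot x x = 0 -> x = 0.
Proof.
move=> h; apply/matrixP => i j; rewrite (ord1 j) mxE.
have := h; rewrite /dot => /eqP; rewrite psumr_eq0; last by move=> k _; rewrite -expr2 sqr_ge0.
by move=> /allP /(_ i (mem_index_enum _)) /=; rewrite mulf_eq0 orbb => /eqP.
Qed.

Lemma vnormE x : vnorm x = Num.sqrt (dot x x).
Proof. by rewrite /vnorm /dot; congr Num.sqrt; apply: eq_bigr => i _; rewrite expr2. Qed.
Lemma vnorm_ge0 x : 0 <= vnorm x.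
Proof. by rewrite vnormE sqrtr_ge0. Qed.
Lemma vnorm_sq x : vnorm x ^+ 2 = dot x x.
Proof. by rewrite vnormE sqr_sqrtr // dot_ge0. Qed.

Lemma CS x y : dot x y ^+ 2 <= dot x x * dot y y.
Proof.
have [h0|hp] := eqVneq (dot x x) 0.
  by rewrite (@dot_eq0 x h0) !dot0l expr0n /= mul0r.
have hpos : 0 < dot x x by rewrite lt_neqAle eq_sym hp dot_ge0.
have := dot_ge0 (dot x x *: y - dot x y *: x).
rewrite !(dotDl, dotDr, dotNl, dotNr, dotZl, dotZr).
rewrite (dotC y x) => h.
have : 0 <= dot x x * (dot x x * dot y y - dot x y ^+ 2) by rewrite -[X in _ <= X]addr0 -[X in _ <= X]subr0; nra.
by rewrite pmulr_rge0 // subr_ge0.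
Qed.

Lemma vnormD x y : vnorm (x + y) <= vnorm x + vnorm y.
Proof.
rewrite -(ler_pXn2r (_ : 0 < 2)%N) ?nnegrE ?addr_ge0 ?vnorm_ge0 //.
rewrite sqrrD !vnorm_sq dotDl !dotDr (dotC y x).
have h1 := CS x y.
have h2 : dot x y <= vnorm x * vnorm y.
  apply: (le_trans (ler_norm _)).
  rewrite -sqrtr_sqr !vnormE -sqrtrM ?dot_ge0 //.
  by rewrite ler_sqrt // mulr_ge0 // dot_ge0.
lra.
Qed.

Lemma vnormZ a x : vnorm (a *: x) = `|a| * vnorm x.
Proof.
rewrite !vnormE dotZl dotZr mulrA -expr2 sqrtrM ?sqr_ge0 //.
by rewrite sqrtr_sqr.
Qed.
Lemma vnormN x : vnorm (- x) = vnorm x.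
Proof. by rewrite -scaleN1r vnormZ normrN normr1 mul1r. Qed.
Lemma vnorm0 : vnorm (0 : 'cV[R]_n) = 0.
Proof. by rewrite vnormE dot0l sqrtr0. Qed.
Lemma vnorm_eq0 x : vnorm x = 0 -> x = 0.
Proof. by move=> h; apply: dot_eq0; rewrite -vnorm_sq h expr0n. Qed.
Lemma vnormB x y : vnorm (x - y) <= vnorm x + vnorm y.
Proof. by rewrite -(vnormN y); apply: vnormD. Qed.

Lemma vnorm_sum (I : finType) (f : I -> 'cV[R]_n) :
  vnorm (\sum_i f i) <= \sum_i vnorm (f i).
Proof.
elim/big_rec2: _ => [|i y1 y2 _ h]; first by rewrite vnorm0.
by apply: (le_trans (vnormD _ _)); rewrite lerD2l.
Qed.

Lemma coord_le x i : `|x i 0| <= vnorm x.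
Proof.
rewrite vnormE -sqrtr_sqr ler_sqrt ?dot_ge0 //.
rewrite /dot (bigD1 i) //= expr2 lerDl.
by apply: sumr_ge0 => j _; rewrite -expr2 sqr_ge0.
Qed.

Lemma x_sum x : x = \sum_(j < n) x j 0 *: delta_mx j 0.
Proof.
apply/matrixP => i k; rewrite (ord1 k) summxE (bigD1 i) //= !mxE !eqxx mulr1.
rewrite big1 ?addr0 // => j /negbTE hj; rewrite !mxE eq_sym hj /= mulr0 //.
Qed.

Definition mbound (B : 'M[R]_n) := \sum_(j < n) vnorm (B *m delta_mx j 0).

Lemma mbound_ge0 B : 0 <= mbound B.
Proof. by apply: sumr_ge0 => j _; apply: vnorm_ge0. Qed.

Lemma mbound_le B x : vnorm (B *m x) <= mbound B * vnorm x.
Proof.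
rewrite {1}(x_sum x) mulmx_sumr.
apply: le_trans; first by apply: vnorm_sum.
rewrite /mbound mulr_suml.
apply: ler_sum => j _; rewrite -scalemxAr vnormZ mulrC.
by apply: ler_wpM2l; [apply: vnorm_ge0|apply: coord_le].
Qed.
End Vec.
Section Op.
Variables (R : realType) (n : nat).
Hypothesis hn : (0 < n)%N.
Implicit Types (x y : 'cV[R]_n) (B C : 'M[R]_n).

Lemma normalize x : x != 0 -> vnorm ((vnorm x)^-1 *: x) = 1.
Proof.
move=> hx; have hv : vnorm x != 0 by apply: contra hx => /eqP /vnorm_eq0 ->.
rewrite vnormZ ger0_norm ?invr_ge0 ?vnorm_ge0 // mulVf //.
Qed.

Lemma sphere_nonempty : exists x : 'cV[R]_n, vnorm x = 1.
Proof.
have hx : (const_mx 1 : 'cV[R]_n) != 0.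
  apply/eqP => /matrixP /(_ (Ordinal hn) 0); rewrite !mxE => /eqP; by rewrite oner_eq0.
by exists ((vnorm (const_mx 1 : 'cV[R]_n))^-1 *: const_mx 1); apply: normalize.
Qed.

Let S B := (fun x : 'cV[R]_n => vnorm (B *m x)) @` @sphere R n.

Lemma S_nonempty B : S B !=set0.
Proof. by have [x hx] := sphere_nonempty; exists (vnorm (B *m x)); exists x. Qed.

Lemma S_has_sup B : has_sup (S B).
Proof.
split; first exact: S_nonempty.
exists (mbound B) => _ [x hx <-].
by have := mbound_le B x; rewrite hx mulr1.
Qed.

Lemma opnorm_ge0 B : 0 <= opnorm B.
Proof.
have [x hx] := sphere_nonempty.
apply: le_trans (vnorm_ge0 (B *m x)) _.
by apply: sup_upper_bound; [apply: S_has_sup| exists x].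
Qed.

Lemma opnorm_le B x : vnorm (B *m x) <= opnorm B * vnorm x.
Proof.
have [->|hx] := eqVneq x 0; first by rewrite mulmx0 vnorm0 mulr0.
have hv : 0 < vnorm x.
  by rewrite lt_neqAle vnorm_ge0 andbT eq_sym; apply: contra hx => /eqP /vnorm_eq0 ->.
have h : vnorm (B *m ((vnorm x)^-1 *: x)) <= opnorm B.
  by apply: sup_upper_bound; [apply: S_has_sup| exists ((vnorm x)^-1 *: x) => //; apply: normalize].
rewrite -scalemxAr vnormZ ger0_norm ?invr_ge0 ?vnorm_ge0 // in h.
by rewrite -ler_pdivrMr // mulrC.
Qed.

Lemma opnorm_ub B c : (forall x, vnorm x = 1 -> vnorm (B *m x) <= c) -> opnorm B <= c.
Proof. by move=> h; apply: ge_sup; [apply: S_nonempty| move=> _ [x hx <-]; apply: h]. Qed.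

Lemma opnormM B C : opnorm (B *m C) <= opnorm B * opnorm C.
Proof.
apply: opnorm_ub => x hx; rewrite -mulmxA.
apply: le_trans (opnorm_le _ _) _.
rewrite ler_wpM2l ?opnorm_ge0 //.
by have := opnorm_le C x; rewrite hx mulr1.
Qed.

Lemma opnorm1 : opnorm (1%:M : 'M[R]_n) <= 1.
Proof. by apply: opnorm_ub => x hx; rewrite mul1mx hx. Qed.
End Op.
Section Prods.
Variables (R : realType) (n m : nat).
Hypothesis hn : (0 < n)%N.
Hypothesis hm : (0 < m)%N.
Variable A : 'I_m -> 'M[R]_n.

Inductive isProd : nat -> 'M[R]_n -> Prop :=
| IP0 : isProd 0 1
| IPS k B i : isProd k B -> isProd k.+1 (A i * B).

Lemma prodA_rec k (j : 'I_k.+1 -> 'I_m) :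
  prodA A j = A (j ord_max) * prodA A (fun i => j (widen_ord (leqnSn k) i)).
Proof.
rewrite /prodA big_ord_recl; congr (A (j _) * _).
  by apply: val_inj => /=; rewrite subn1.
apply: eq_bigr => i _; congr (A (j _)); apply: val_inj => /=.
by rewrite /bump /= add1n subSS.
Qed.

Lemma isProd_prodA k (j : 'I_k -> 'I_m) : isProd k (prodA A j).
Proof.
elim: k j => [|k IH] j; first by rewrite /prodA big_ord0; constructor.
by rewrite prodA_rec; constructor; apply: IH.
Qed.

Lemma prodA_of_isProd k B : isProd k B -> exists j : {ffun 'I_k -> 'I_m}, B = prodA A j.
Proof.
elim=> [|{}k {}B i _ [j ->]].
  by exists [ffun => Ordinal hm]; rewrite /prodA big_ord0.
exists [ffun x : 'I_k.+1 => if unlift ord_max x is Some y then j y else i].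
rewrite prodA_rec ffunE unlift_none; congr (_ * _).
rewrite /prodA; apply: eq_bigr => x _; rewrite ffunE.
have -> : widen_ord (leqnSn k) (rev_ord x) = lift ord_max (rev_ord x).
  apply: val_inj; rewrite /= /bump.
  have -> : (k <= k - x.+1)%N = false by apply/negbTE; rewrite -ltnNge; have := ltn_ord x; lia.
  by [].
by rewrite liftK.
Qed.

Lemma isProd_mul a b B C : isProd a B -> isProd b C -> isProd (b + a) (C * B).
Proof.
move=> hB; elim=> [|k D i _ IH]; first by rewrite mul1r add0n.
by rewrite -mulrA addSn; constructor.
Qed.

Lemma isProd_split a b D : isProd (a + b) D ->
  exists B C, [/\ isProd a B, isProd b C & D = C * B].
Proof.
elim: b D => [|b IH] D; first by rewrite addn0 => h; exists D, 1; split => //; [constructor| rewrite mul1r].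
rewrite addnS => h; inversion h; subst.
have [B1 [C1 [h1 h2 ->]]] := IH _ H0.
by exists B1, (A i * C1); split => //; [constructor | rewrite mulrA].
Qed.

Definition abound := 1 + \sum_i opnorm (A i).

Lemma abound_ge1 : 1 <= abound.
Proof. by rewrite lerDl; apply: sumr_ge0 => i _; apply: (opnorm_ge0 hn). Qed.

Lemma opnorm_isProd_a k B : isProd k B -> opnorm B <= abound ^+ k.
Proof.
elim=> [|{}k {}B i _ IH]; first by rewrite expr0 -idmxE; apply: opnorm1.
apply: le_trans (opnormM hn _ _) _; rewrite exprS.
apply: ler_pM => //; [exact: (opnorm_ge0 hn) | exact: (opnorm_ge0 hn) |].
rewrite /abound (bigD1 i) //= addrCA lerDl addr_ge0 //.
by apply: sumr_ge0 => ? _; apply: (opnorm_ge0 hn).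
Qed.
End Prods.
Section Fekete.
Variables (R : realType) (n m : nat).
Hypothesis hn : (0 < n)%N.
Hypothesis hm : (0 < m)%N.
Variable A : 'I_m -> 'M[R]_n.

Lemma fek_step P lam : 0 <= lam -> (forall B, isProd A P B -> opnorm B <= lam ^+ P) ->
  forall q r B, isProd A (r + q * P) B -> opnorm B <= lam ^+ (q * P) * abound A ^+ r.
Proof.
move=> hl hP; elim=> [|q IH] r B.
  by rewrite mul0n addn0 expr0 mul1r; apply: opnorm_isProd_a.
rewrite mulSnr addnA => /isProd_split [B0 [C [h0 hC ->]]].
apply: le_trans (opnormM hn _ _) _.
rewrite exprD (mulrC (lam ^+ _)) -mulrA.
apply: ler_pM; [exact: (opnorm_ge0 hn) | exact: (opnorm_ge0 hn) | exact: hP | exact: IH].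
Qed.

Lemma fekete_bound P lam : (0 < P)%N -> 0 < lam ->
  (forall B, isProd A P B -> opnorm B <= lam ^+ P) ->
  exists C, 0 < C /\ forall k B, isProd A k B -> opnorm B <= C * lam ^+ k.
Proof.
move=> hP hl hB.
set M := Num.max 1 (abound A / lam).
have hM1 : 1 <= M by rewrite le_max lexx.
have hM0 : 0 <= M by apply: le_trans hM1.
exists (M ^+ P); split; first by rewrite exprn_gt0 // (lt_le_trans ltr01).
move=> k B; rewrite (divn_eq k P) addnC => hk.
apply: le_trans (fek_step (ltW hl) hB hk) _.
set q := (k %/ P)%N; set r := (k %% P)%N.
have hr : (r < P)%N by rewrite ltn_pmod.
rewrite exprD.
have -> : M ^+ P * (lam ^+ r * lam ^+ (q * P)) = lam ^+ (q * P) * (M ^+ P * lam ^+ r) by ring.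
rewrite ler_pM2l ?exprn_gt0 //.
have ha : abound A ^+ r = (abound A / lam) ^+ r * lam ^+ r.
  by rewrite -exprMn mulfVK // gt_eqF.
rewrite ha ler_pM2r ?exprn_gt0 //.
apply: le_trans (ler_weXn2l hM1 (ltnW hr)).
apply: lerXn2r; rewrite ?nnegrE ?le_max ?lexx ?orbT //.
- by rewrite divr_ge0 ?ltW //; apply: lt_le_trans ltr01 (abound_ge1 hn A).
- by rewrite ler01.
Qed.
End Fekete.
Lemma bernoulli_ineq (R : realType) (h : R) (K : nat) : 0 <= h -> 1 + K%:R * h <= (1 + h) ^+ K.
Proof.
move=> h0; elim: K => [|K IH]; first by rewrite mul0r addr0 expr0.
rewrite exprS; apply: le_trans (ler_wpM2l (addr_ge0 ler01 h0) IH).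
rewrite -natr1 mulrDl mul1r; have := ler0n R K; nra.
Qed.

Lemma powinv_le (R : realType) (K : nat) (x c : R) : (0 < K)%N -> 0 <= x -> 0 <= c ->
  (x `^ (K%:R)^-1 <= c) = (x <= c ^+ K).
Proof.
move=> hK hx hc; rewrite -(ler_pXn2r hK) ?nnegrE ?powR_ge0 //.
suff -> : (x `^ (K%:R)^-1) ^+ K = x by [].
by rewrite -powR_mulrn ?powR_ge0 // -powRrM mulVf ?pnatr_eq0 -?lt0n // ?powRr1 //.
Qed.

Section JSR.
Variables (R : realType) (n m : nat).
Hypothesis hn : (0 < n)%N.
Hypothesis hm : (0 < m)%N.
Variable A : 'I_m -> 'M[R]_n.

Lemma u_ge0 k : 0 <= jsr_seq A k.
Proof. by rewrite /jsr_seq; elim/big_rec: _ => // j acc _ h; rewrite le_max h orbT. Qed.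

Lemma u_ub k (j : {ffun 'I_k.+1 -> 'I_m}) :
  opnorm (prodA A j) `^ (k.+1%:R)^-1 <= jsr_seq A k.
Proof. exact: le_bigmax. Qed.

Lemma u_le k c : 0 <= c -> (forall j : {ffun 'I_k.+1 -> 'I_m}, opnorm (prodA A j) <= c ^+ k.+1) ->
  jsr_seq A k <= c.
Proof.
move=> hc h; apply: bigmax_le => // j _.
by rewrite powinv_le // ?(opnorm_ge0 hn).
Qed.

Lemma prod_bound lam : 0 < lam -> (exists p, jsr_seq A p < lam) ->
  exists C, 0 < C /\ forall k B, isProd A k B -> opnorm B <= C * lam ^+ k.
Proof.
move=> hl [p hp]; apply: (fekete_bound hn (P := p.+1)) => // B hB.
have [j ->] := prodA_of_isProd hn hm hB.
rewrite -powinv_le ?(opnorm_ge0 hn) ?ltW //.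
exact: le_lt_trans (u_ub j) hp.
Qed.

Definition Linf := inf (range (jsr_seq A)).

Lemma has_inf_u : has_inf (range (jsr_seq A)).
Proof. split; first by exists (jsr_seq A 0), 0%N. by exists 0 => _ [k _ <-]; apply: u_ge0. Qed.

Lemma Linf_ge0 : 0 <= Linf.
Proof. by apply: lb_le_inf; [exists (jsr_seq A 0), 0%N | move=> _ [k _ <-]; apply: u_ge0]. Qed.

Lemma Linf_le k : Linf <= jsr_seq A k.
Proof. by apply: (ge_inf (has_inf_u).2); exists k. Qed.

Lemma u_cvg : jsr_seq A @ \oo --> Linf.
Proof.
apply/cvgrPdist_le => eps he.
set lam := Linf + eps / 2.
have hl : 0 < lam by rewrite /lam ltr_wpDl ?Linf_ge0 // divr_gt0.
have [p _ hp] : exists2 p, True & jsr_seq A p < lam.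
  have [_ [p _ <-] hp] := inf_adherent (divr_gt0 he (ltr0Sn _ 1)) has_inf_u.
  by exists p.
have [C [hC hb]] := prod_bound hl (ex_intro _ p hp).
set mu := Linf + eps.
have hmu : 0 < mu by rewrite /mu ltr_wpDl ?Linf_ge0.
set h := mu / lam - 1.
have hh : 0 < h.
  rewrite /h subr_gt0 ltr_pdivlMr // mul1r /mu /lam ltrD2l.
  by rewrite ltr_pdivrMr // ltr_pMr // ltr1n.
exists (Num.Def.trunc (C / h)).+1 => // k /= hk.
rewrite distrC ger0_norm; last by rewrite subr_ge0 Linf_le.
rewrite lerBlDl; apply: u_le; first exact: ltW.
move=> j; apply: le_trans (hb _ _ (isProd_prodA A j)) _.
have -> : Linf + eps = (1 + h) * lam by rewrite /h [1 + _]addrC subrK divfK // gt_eqF.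
rewrite exprMn ler_pM2r ?exprn_gt0 //.
apply: le_trans (bernoulli_ineq _ (ltW hh)).
have h1 : C / h < k%:R by apply: lt_le_trans (truncnS_gt _) _; rewrite ler_nat.
rewrite ltr_pdivrMr // in h1.
rewrite -natr1; nra.
Qed.

Lemma jsr_eq : jsr A = Linf.
Proof. rewrite /jsr. exact: (cvg_lim (T:=R^o) _ u_cvg). Qed.

Lemma jsr_ge0 : 0 <= jsr A.
Proof. by rewrite jsr_eq Linf_ge0. Qed.

Lemma jsr_bound lam : jsr A < lam ->
  exists C, 0 < C /\ forall k B, isProd A k B -> opnorm B <= C * lam ^+ k.
Proof.
rewrite jsr_eq => hl.
have hl0 : 0 < lam by apply: le_lt_trans Linf_ge0 hl.
apply: prod_bound => //.
have hd : 0 < lam - Linf by rewrite subr_gt0.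
have [_ [p _ <-] hp] := inf_adherent hd has_inf_u.
by exists p; rewrite /Linf addrC subrK in hp.
Qed.
End JSR.
Section Det.
Variables (R : realType) (n : nat).

Lemma det_rank1 (u : 'cV[R]_n) (v : 'rV[R]_n) :
  \det (1 + u *m v) = 1 + (v *m u) 0 0.
Proof.
have e1 : \det (block_mx (1 + u *m v) u 0 (1 : 'M[R]_1)) = \det (1 + u *m v).
  by rewrite det_ublock det1 mulr1.
have e2 : \det (block_mx (1 : 'M[R]_n) 0 (- v) (1 : 'M[R]_1)) = 1.
  by rewrite det_lblock !det1 mulr1.
have e3 : \det (block_mx (1 : 'M[R]_n) (- u) 0 (1 : 'M[R]_1)) = 1.
  by rewrite det_ublock !det1 mulr1.
have e4 : block_mx (1 + u *m v) u 0 (1 : 'M[R]_1) *m block_mx (1 : 'M[R]_n) 0 (- v) (1 : 'M[R]_1)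
   = block_mx 1 u (- v) 1.
  rewrite mulmx_block !mulmx1 !mul1mx !mulmx0 ?mul0mx ?addr0 ?add0r.
  by rewrite mulmxN -addrA subrr addr0.
have e5 : block_mx (1 : 'M[R]_n) u (- v) (1 : 'M[R]_1) *m block_mx (1 : 'M[R]_n) (- u) 0 (1 : 'M[R]_1)
   = block_mx 1 0 (- v) (1 + v *m u).
  rewrite mulmx_block !mulmx1 !mul1mx !mulmx0 !addr0.
  by rewrite mulmxN mulNmx opprK addNr addrC.
have := congr1 determinant e4; rewrite det_mulmx e1 e2 mulr1 => h.
have := congr1 determinant e5; rewrite det_mulmx e3 mulr1 det_lblock det1 mul1r -h => ->.
by rewrite det_mx11 !mxE.
Qed.

Lemma det_bound (T : 'M[R]_n) : (forall i j, `|T i j| <= 1) -> `|\det T| <= (n`!)%:R.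
Proof.
move=> h; rewrite /determinant; apply: le_trans (ler_norm_sum _ _ _) _.
rewrite -perm.card_Sn -sum1_card natr_sum; apply: ler_sum => s _.
rewrite normrM normrX normrN normr1 expr1n mul1r normr_prod.
by apply: prodr_ile1 => i _; rewrite normr_ge0 h.
Qed.
End Det.
Lemma keyineq (R : realType) (r t al be sg rho : R) :
  1 < r -> 0 < t -> t < 1 -> al ^+ 2 = 1 + t * (r ^+ 2 - 1) -> be ^+ 2 = 1 - t ->
  0 < al -> 0 <= sg -> sg <= rho ->
  (al * sg - (r * al * sg - rho) / (r ^+ 2 - 1) * r) ^+ 2 + be ^+ 2 * (rho ^+ 2 - sg ^+ 2)
  <= (rho - (r * al * sg - rho) / (r ^+ 2 - 1)) ^+ 2.
Proof.
move=> hr ht0 ht1 ha hb hal hs hsr.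
have hd : 0 < r ^+ 2 - 1 by rewrite subr_gt0 -(expr1n _ 2) ltrXn2r // ltW // (lt_trans ltr01 hr).
have hd0 : r ^+ 2 - 1 != 0 by rewrite gt_eqF.
have htd : t = (al ^+ 2 - 1) / (r ^+ 2 - 1) by rewrite ha addrAC subrr add0r mulfK.
rewrite hb htd -subr_ge0.
have -> : (rho - (r * al * sg - rho) / (r ^+ 2 - 1)) ^+ 2 -
  ((al * sg - (r * al * sg - rho) / (r ^+ 2 - 1) * r) ^+ 2 +
   (1 - (al ^+ 2 - 1) / (r ^+ 2 - 1)) * (rho ^+ 2 - sg ^+ 2)) =
   (al * rho - r * sg) ^+ 2 / (r ^+ 2 - 1) by field.
by rewrite divr_ge0 ?sqr_ge0 // ltW.
Qed.

Lemma lam_le (R : realType) (r t al sg rho : R) :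
  1 < r -> 0 <= t -> t <= 1 -> al ^+ 2 = 1 + t * (r ^+ 2 - 1) ->
  0 < al -> 0 <= sg -> sg <= rho ->
  (r * al * sg - rho) / (r ^+ 2 - 1) <= rho.
Proof.
move=> hr ht0 ht1 ha hal hs hsr.
have hd : 0 < r ^+ 2 - 1 by rewrite subr_gt0 -(expr1n _ 2) ltrXn2r // ltW // (lt_trans ltr01 hr).
rewrite ler_pdivrMr //.
have hr0 : 0 < r by apply: lt_trans ltr01 hr.
have hal_r : al <= r.
  rewrite -(ler_pXn2r (_ : (0 < 2)%N)) // ?nnegrE; last first.
  - exact: ltW hr0.
  - exact: ltW hal.
  rewrite ha -subr_ge0.
  have -> : r ^+ 2 - (1 + t * (r ^+ 2 - 1)) = (1 - t) * (r ^+ 2 - 1) by ring.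
  by apply: mulr_ge0; [rewrite subr_ge0 | exact: ltW hd].
have : al * sg <= r * rho by apply: ler_pM => //; exact: ltW hal.
nra.
Qed.
Section Hull.
Variables (R : realType) (n : nat).
Implicit Types (w q x y : 'cV[R]_n).

Definition Dmat w (al be : R) : 'M[R]_n := be *: 1%:M + (al - be) *: (w *m w^T).

Lemma trmul w q : w^T *m q = (dot w q)%:M.
Proof.
apply/matrixP => i j; rewrite (ord1 i) (ord1 j) !mxE /dot eqxx mulr1n.
by apply: eq_bigr => k _; rewrite mxE.
Qed.

Lemma Dmat_mul w q al be : Dmat w al be *m q = be *: q + ((al - be) * dot w q) *: w.
Proof.
rewrite /Dmat mulmxDl -!scalemxAl mul1mx -mulmxA trmul mul_mx_scalar.
by rewrite scalerA.
Qed.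

Lemma le_sq (a b : R) : 0 <= a -> 0 <= b -> a ^+ 2 <= b ^+ 2 -> a <= b.
Proof. by move=> ha hb; rewrite ler_pXn2r // ?nnegrE. Qed.

Lemma hull w q r t : dot w w = 1 -> 1 < r -> 0 < t -> t < 1 ->
  exists a z, Dmat w (Num.sqrt (1 + t * (r ^+ 2 - 1))) (Num.sqrt (1 - t)) *m q
     = a *: (r *: w) + z /\ `|a| + vnorm z <= vnorm q.
Proof.
move=> hw hr ht0 ht1.
set al := Num.sqrt _; set be := Num.sqrt _.
have hd : 0 < r ^+ 2 - 1 by rewrite subr_gt0 -(expr1n _ 2) ltrXn2r // ltW // (lt_trans ltr01 hr).
have hal2 : al ^+ 2 = 1 + t * (r ^+ 2 - 1) by rewrite sqr_sqrtr // addr_ge0 // mulr_ge0 // ltW.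
have hbe2 : be ^+ 2 = 1 - t by rewrite sqr_sqrtr // subr_ge0 ltW.
have hal : 0 < al by rewrite sqrtr_gt0 ltr_wpDr // mulr_ge0 // ltW.
have hbe : 0 <= be by rewrite sqrtr_ge0.
have hal1 : 1 <= al.
  apply: le_sq; rewrite ?ler01 ?(ltW hal) // hal2 expr1n lerDl mulr_ge0 // ltW //.
set s := dot w q; set y := q - s *: w.
have hwy : dot w y = 0 by rewrite /y dotDr dotNr dotZr hw mulr1 subrr.
have hqy : q = s *: w + y by rewrite /y addrC subrK.
have hs : s = dot w q by [].
clearbody y s.
have hq2 : vnorm q ^+ 2 = s ^+ 2 + dot y y.
  rewrite vnorm_sq {1 2}hqy !(dotDl, dotDr, dotZl, dotZr) hw hwy (dotC y w) hwy; ring.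
have hnz : forall a b, vnorm (a *: w + b *: y) ^+ 2 = a ^+ 2 + b ^+ 2 * dot y y.
  move=> a b; rewrite vnorm_sq !(dotDl, dotDr, dotZl, dotZr) hw hwy (dotC y w) hwy; ring.
have hDq : Dmat w al be *m q = (al * s) *: w + be *: y.
  rewrite Dmat_mul {1}hqy scalerDr scalerA addrC addrA -scalerDl; congr (_ *: _ + _).
  rewrite -hs; ring.
have hY : 0 <= dot y y by apply: dot_ge0.
set rho := vnorm q.
have hrho : 0 <= rho by apply: vnorm_ge0.
have hsr : `|s| <= rho.
  apply: le_sq => //; rewrite real_normK ?num_real // hq2 lerDl //.
have [hc|hc] := leP (r * al * `|s|) rho.
  exists 0, (Dmat w al be *m q); split; first by rewrite scale0r add0r.
  rewrite normr0 add0r hDq; apply: le_sq => //; first exact: vnorm_ge0.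
  rewrite hnz hq2 exprMn hal2 hbe2.
  have h1 : r ^+ 2 * s ^+ 2 <= rho ^+ 2.
    have : r * `|s| <= rho.
      apply: le_trans hc; rewrite -mulrA (mulrC al) mulrA ler_peMr //.
      by rewrite mulr_ge0 // ltW // (lt_trans ltr01 hr).
    move=> h; rewrite -(real_normK (num_real s)) -exprMn; apply: lerXn2r => //.
    by rewrite nnegrE mulr_ge0 // ltW // (lt_trans ltr01 hr).
  rewrite hq2 in h1.
  nra.
set lam := (r * al * `|s| - rho) / (r ^+ 2 - 1).
have hlam0 : 0 <= lam by apply: divr_ge0; [rewrite subr_ge0; exact: ltW hc | exact: ltW hd].
have hlamr : lam <= rho by apply: (lam_le (t := t)) => //; apply: ltW.
set e : R := if 0 <= s then 1 else -1.
have he : s = e * `|s| by rewrite /e; case: ifP => h; [rewrite ger0_norm // mul1r | rewrite ltr0_norm ?mulN1r ?opprK // ltNge h].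
have he2 : e ^+ 2 = 1 by rewrite /e; case: ifP => _; rewrite ?expr1n // sqrrN expr1n.
have hen : `|e| = 1 by rewrite /e; case: ifP => _; rewrite ?normr1 // normrN normr1.
exists (e * lam), ((al * s - e * lam * r) *: w + be *: y); split.
  rewrite hDq scalerA addrA -scalerDl; congr (_ *: _ + _); ring.
rewrite normrM hen mul1r ger0_norm //.
rewrite -lerBrDl; apply: le_sq; [exact: vnorm_ge0 | by rewrite subr_ge0 |].
rewrite hnz.
have -> : (al * s - e * lam * r) ^+ 2 = (al * `|s| - lam * r) ^+ 2.
  have -> : al * s - e * lam * r = e * (al * `|s| - lam * r) by rewrite {1}he; ring.
  by rewrite exprMn he2 mul1r.
have -> : dot y y = rho ^+ 2 - `|s| ^+ 2 by rewrite /rho hq2 real_normK ?num_real // addrAC subrr add0r.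
by apply: (keyineq (t := t)).
Qed.
End Hull.
Lemma bern_sub (R : realType) (t : R) (K : nat) : 0 <= t -> t <= 1 -> 1 - K%:R * t <= (1 - t) ^+ K.
Proof.
move=> h0 h1; elim: K => [|K IH]; first by rewrite mul0r subr0 expr0.
rewrite exprS; apply: le_trans (ler_wpM2l (_ : 0 <= 1 - t) IH); last by rewrite subr_ge0.
rewrite -natr1; have := ler0n R K; nra.
Qed.

Lemma vnorm_delta (R : realType) (n : nat) (j : 'I_n) : vnorm (delta_mx j 0 : 'cV[R]_n) = 1.
Proof.
rewrite vnormE /dot (bigD1 j) //= big1 ?addr0 ?mxE ?eqxx ?mulr1 ?sqrtr1 //.
by move=> i /negbTE hi; rewrite mxE hi mulr0.
Qed.

Section Geo.
Variables (R : realType) (n m : nat).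
Hypothesis hn : (0 < n)%N.
Variable A : 'I_m -> 'M[R]_n.
Variables (lam C : R).
Hypothesis hl : 0 < lam.
Hypothesis hC : 0 < C.
Hypothesis hb : forall k B, isProd A k B -> opnorm B <= C * lam ^+ k.

Definition adm (T : 'M[R]_n) := forall q k B, isProd A k B ->
  vnorm (B *m (T *m q)) <= lam ^+ k * vnorm q.
Definition inK (x : 'cV[R]_n) := forall k B, isProd A k B -> vnorm (B *m x) <= lam ^+ k.

Lemma adm_inK T u : adm T -> vnorm u <= 1 -> inK (T *m u).
Proof.
move=> hT hu k B hB; apply: le_trans (hT _ _ _ hB) _.
by rewrite -[X in _ <= X]mulr1 ler_wpM2l // exprn_ge0 // ltW.
Qed.

Lemma inK_scale x mu : inK x -> 0 <= mu <= 1 -> inK (mu *: x).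
Proof.
move=> hx /andP [h0 h1] k B hB; rewrite -scalemxAr vnormZ ger0_norm //.
apply: le_trans (ler_wpM2l h0 (hx _ _ hB)) _.
by rewrite -[X in _ <= X]mul1r ler_wpM2r // exprn_ge0 // ltW.
Qed.

Lemma adm_entry T : adm T -> forall i j, `|T i j| <= 1.
Proof.
move=> hT i j; have := hT (delta_mx j 0) 0%N 1 (IP0 A).
rewrite expr0 mul1r vnorm_delta mul1mx -colE => h.
by apply: le_trans h; have := coord_le (col j T) i; rewrite mxE.
Qed.

Definition T0 : 'M[R]_n := C^-1 *: 1%:M.

Lemma adm_T0 : adm T0.
Proof.
move=> q k B hB; rewrite /T0 -scalemxAl mul1mx -scalemxAr vnormZ ger0_norm; last by rewrite invr_ge0 ltW.
rewrite -(ler_pM2l hC) mulrA mulfV ?gt_eqF // mul1r mulrA.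
apply: le_trans (opnorm_le hn B q) _.
by apply: ler_wpM2r; [apply: vnorm_ge0 | apply: hb].
Qed.

Definition Dset := (fun T => `|\det T|) @` adm.

Lemma Dset_sup : has_sup Dset.
Proof.
split; first by exists `|\det T0|, T0; [apply: adm_T0|].
exists (n`!)%:R => _ [T hT <-]; apply: det_bound; exact: adm_entry.
Qed.

Lemma D_gt0 : 0 < sup Dset.
Proof.
apply: lt_le_trans (sup_upper_bound Dset_sup (ex_intro2 _ _ T0 adm_T0 erefl)).
rewrite normr_gt0 /T0 detZ det1 mulr1 expf_neq0 // invr_eq0 gt_eqF //.
Qed.


Lemma det_Dmat (w : 'cV[R]_n) al be : dot w w = 1 -> 0 < be ->
  \det (Dmat w al be) = al * be ^+ n.-1.
Proof.
move=> hw hbe.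
have -> : Dmat w al be = be *: (1 + (((al - be) / be) *: w) *m w^T).
  rewrite /Dmat scalerDr -scalemxAl scalerA [be * _]mulrC -mulrA mulVf ?mulr1 ?gt_eqF // idmxE.
rewrite detZ det_rank1 trmul mxE eqxx mulr1n dotZr hw mulr1.
rewrite -{1}(prednK hn) exprS; field; by rewrite gt_eqF.
Qed.

Lemma john c : 1 < c -> n%:R < c ^+ 2 ->
  exists T, [/\ adm T, \det T != 0 & forall v, inK (T *m v) -> vnorm v <= c].
Proof.
move=> hc1 hcn.
set D := sup Dset.
have hD : 0 < D := D_gt0.
have hc0 : 0 < c by apply: lt_trans ltr01 hc1.
set N : R := n%:R.
have hN : 1 <= N by rewrite /N ler1n.
set h := c ^+ 2 - N.
have hh : 0 < h by rewrite subr_gt0.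
set t := h / (2 * N * c ^+ 2).
have hden : 0 < 2 * N * c ^+ 2 by rewrite !mulr_gt0 // ?exprn_gt0 // (lt_le_trans ltr01 hN).
have htd : t * (2 * N * c ^+ 2) = h by rewrite /t divfK // gt_eqF.
have ht0 : 0 < t by rewrite divr_gt0.
have hc2 : 0 < c ^+ 2 by rewrite exprn_gt0.
have ht1 : t < 1.
  rewrite /t ltr_pdivrMr // mul1r /h; nra.
set kap := t * h / 2.
have hk : 0 < kap by rewrite /kap divr_gt0 // mulr_gt0.
have hk1 : 0 < 1 + kap by rewrite addr_gt0.
set q := kap / (2 * (1 + kap)).
have hq : 0 < q by rewrite /q divr_gt0 // mulr_gt0 // addr_gt0.
have hq2 : (1 - 2 * q) * (1 + kap) = 1.
  by rewrite /q; field; rewrite gt_eqF.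
have hq1 : 2 * q < 1.
  have : 0 < (1 - 2 * q) * (1 + kap) by rewrite hq2.
  by rewrite pmulr_lgt0 // subr_gt0.
have [_ [T hT <-] he] := sup_adherent (mulr_gt0 hD hq) Dset_sup.
rewrite -/D in he.
have hDq : 0 < D - D * q by rewrite -{1}(mulr1 D) -mulrBr mulr_gt0 // subr_gt0; nra.
have hdT : 0 < `|\det T| by apply: lt_trans hDq he.
have hdetT : D ^+ 2 < `|\det T| ^+ 2 * (1 + kap).
  have hDq0 := ltW hDq.
  have h1 : (D - D * q) ^+ 2 < `|\det T| ^+ 2 by rewrite ltr_pXn2r // ?nnegrE ?normr_ge0.
  have h2 : D ^+ 2 <= (D - D * q) ^+ 2 * (1 + kap).
    have -> : (D - D * q) ^+ 2 * (1 + kap) = D ^+ 2 * ((1 - 2 * q) * (1 + kap)) + D ^+ 2 * q ^+ 2 * (1 + kap) by ring.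
    rewrite hq2 mulr1 lerDl; apply: mulr_ge0; [apply: mulr_ge0; apply: sqr_ge0 | exact: ltW hk1].
  by apply: le_lt_trans h2 _; rewrite ltr_pM2r.
exists T; split => //; first by rewrite -normr_gt0.
move=> v hv; rewrite leNgt; apply/negP => hvc.
have hvn : 0 < vnorm v by apply: lt_trans hc0 hvc.
set v' := (c / vnorm v) *: v.
have hv' : inK (T *m v').
  rewrite /v' -scalemxAr; apply: inK_scale => //.
  apply/andP; split; first by apply: divr_ge0; apply: ltW.
  by rewrite ler_pdivrMr // mul1r; apply: ltW.
have hnv' : vnorm v' = c by rewrite /v' vnormZ ger0_norm ?divfK ?gt_eqF // divr_ge0 // ltW.
set w := c^-1 *: v'.
have hw : dot w w = 1.
  by rewrite -vnorm_sq /w vnormZ hnv' ger0_norm ?invr_ge0 ?mulVf ?gt_eqF ?expr1n // ltW.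
have hvw : c *: w = v' by rewrite /w scalerA mulfV ?gt_eqF // scale1r.
set al := Num.sqrt (1 + t * (c ^+ 2 - 1)).
set be := Num.sqrt (1 - t).
have hbe : 0 < be by rewrite sqrtr_gt0 subr_gt0.
set T' := T *m Dmat w al be.
have hT' : adm T'.
  move=> q0 k B hB.
  have [a [z [hz hle]]] := hull q0 hw hc1 ht0 ht1.
  rewrite /T' -mulmxA hz hvw mulmxDr -scalemxAr mulmxDr -scalemxAr.
  apply: le_trans (vnormD _ _) _; rewrite vnormZ.
  have h1 := hv' k B hB; have h2 := hT z k B hB.
  have hlk : 0 <= lam ^+ k by rewrite exprn_ge0 // ltW.
  apply: le_trans (_ : `|a| * lam ^+ k + lam ^+ k * vnorm z <= _).
    by apply: lerD => //; apply: ler_wpM2l.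
  by rewrite mulrC -mulrDr ler_wpM2l.
have hle : `|\det T'| <= D := sup_upper_bound Dset_sup (ex_intro2 _ _ T' hT' erefl).
have hdet : \det T' = \det T * (al * be ^+ n.-1) by rewrite det_mulmx det_Dmat.
have hc21 : 0 <= c ^+ 2 - 1 by rewrite subr_ge0; apply: ltW; apply: le_lt_trans hN hcn.
have hal2 : al ^+ 2 = 1 + t * (c ^+ 2 - 1).
  by rewrite sqr_sqrtr //; apply: addr_ge0 => //; apply: mulr_ge0; [exact: ltW ht0 | exact: hc21].
have hbe2 : be ^+ 2 = 1 - t by rewrite sqr_sqrtr // subr_ge0; apply: ltW.
have hprod : 1 + kap <= (al * be ^+ n.-1) ^+ 2.
  rewrite exprMn -exprM mulnC exprM hbe2 hal2.
  have hbern := bern_sub n.-1 (ltW ht0) (ltW ht1).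
  have hN1 : (n.-1)%:R = N - 1 by rewrite /N -{2}(prednK hn) -natr1 addrK.
  rewrite hN1 in hbern.
  apply: le_trans (ler_wpM2l _ hbern); last by rewrite addr_ge0 // mulr_ge0 // ltW.
  rewrite /kap /h.
  have hh' : c ^+ 2 - N = t * (2 * N * c ^+ 2) by rewrite htd.
  rewrite hh' -subr_ge0.
  have -> : (1 + t * (c ^+ 2 - 1)) * (1 - (N - 1) * t) - (1 + t * (t * (2 * N * c ^+ 2)) / 2)
    = t ^+ 2 * (c ^+ 2 + N - 1) - t * (t * (2 * N * c ^+ 2)) + t * (c ^+ 2 - N) by field.
  rewrite hh' subrK; apply: mulr_ge0; first exact: sqr_ge0.
  by rewrite -addrA addr_ge0 // ?subr_ge0 // ltW.
have : `|\det T| ^+ 2 * (1 + kap) <= D ^+ 2.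
  apply: le_trans (_ : `|\det T'| ^+ 2 <= _); last by rewrite lerXn2r // ?nnegrE ltW.
  rewrite hdet normrM exprMn real_normK ?num_real //.
  by apply: ler_wpM2l; [exact: sqr_ge0 | rewrite real_normK ?num_real].
by rewrite leNgt hdetT.
Qed.
End Geo.
Lemma powinvK (R : realType) (K : nat) (a : R) : (0 < K)%N -> 0 <= a -> (a `^ (K%:R)^-1) ^+ K = a.
Proof.
move=> hK ha.
by rewrite -powR_mulrn ?powR_ge0 // -powRrM mulVf ?pnatr_eq0 -?lt0n // ?powRr1 //.
Qed.

Lemma qformE (R : realType) (n : nat) (S : 'M[R]_n) (x : 'cV[R]_n) :
  qform (S^T *m S) x = dot (S *m x) (S *m x).
Proof.
by rewrite /qform mulmxA -trmx_mul -mulmxA trmul mxE eqxx mulr1n.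
Qed.

Section Final.
Variables (R : realType) (n m l N : nat).
Hypothesis hn : (0 < n)%N.
Hypothesis hm : (0 < m)%N.
Hypothesis hl : (0 < l)%N.
Variable A : 'I_m -> 'M[R]_n.
Variables (xs : 'I_N -> 'cV[R]_n) (js : 'I_N -> ('I_l -> 'I_m)).

Let Nn : R := n%:R `^ ((2 * l)%:R)^-1.

Lemma Nn_gt0 : 0 < Nn.
Proof. by rewrite /Nn powR_gt0 // ltr0n. Qed.

Lemma NnK : Nn ^+ (2 * l) = n%:R.
Proof. by rewrite /Nn powinvK // muln_gt0. Qed.

Lemma feasible_of g : jsr A * Nn < g -> feasible A xs js g.
Proof.
move=> hg.
have hJ := jsr_ge0 hn hm A.
have hN := Nn_gt0.
have hg0 : 0 < g by apply: le_lt_trans hg; rewrite mulr_ge0 // ltW.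
have hJg : jsr A < g / Nn by rewrite ltr_pdivlMr.
set lam := (jsr A + g / Nn) / 2.
have hlam1 : jsr A < lam by rewrite /lam ltr_pdivlMr // mulr2n mulrDr mulr1 ltrD2l.
have hlam2 : lam < g / Nn by rewrite /lam ltr_pdivrMr // mulr2n mulrDr mulr1 ltrD2r.
have hlam0 : 0 < lam by apply: le_lt_trans hlam1.
have [C [hC hb]] := jsr_bound hn hm hlam1.
set c := (g / lam) ^+ l.
have hgl : Nn < g / lam by rewrite ltr_pdivlMr // mulrC -ltr_pdivlMr.
have hc2 : n%:R < c ^+ 2.
  rewrite /c -exprM mulnC -NnK ltr_pXn2r ?muln_gt0 // nnegrE.
  - exact: ltW hN.
  - by apply: divr_ge0; apply: ltW.
have hc0 : 0 < c by rewrite exprn_gt0 // divr_gt0.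
have hc1 : 1 < c.
  rewrite ltNge; apply/negP => h.
  have : c ^+ 2 <= 1 by rewrite -(expr1n _ 2) lerXn2r // nnegrE ltW.
  have : 1 <= n%:R :> R by rewrite ler1n.
  move=> h1 h2; have := lt_le_trans hc2 h2; rewrite ltNge h1 //.
have [T [hT hdet hK]] := john hn hlam0 hC hb hc1 hc2.
have hTu : T \in unitmx by rewrite unitmxE unitfE.
set S := invmx T.
have hTS : forall y : 'cV[R]_n, T *m (S *m y) = y by move=> y; rewrite mulmxA mulmxV // mul1mx.
have hSv : forall (y : 'cV[R]_n) (M : R), 0 < M -> (forall k B, isProd A k B -> vnorm (B *m y) <= lam ^+ k * M) ->
    vnorm (S *m y) <= c * M.
  move=> y M hM hy.
  have hin : inK A lam (T *m (S *m (M^-1 *: y))).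
    rewrite hTS => k B hB; rewrite -scalemxAr vnormZ ger0_norm ?invr_ge0; last exact: ltW.
    by rewrite mulrC ler_pdivrMr //; apply: hy.
  have := hK _ hin; rewrite -scalemxAr vnormZ ger0_norm ?invr_ge0; last exact: ltW.
  by rewrite mulrC ler_pdivrMr.
split; first exact: ltW.
exists (S^T *m S); split.
  split; first by rewrite trmx_mul trmxK.
  move=> x hx; rewrite qformE lt_neqAle dot_ge0 andbT eq_sym.
  apply/negP => /eqP /dot_eq0 hSx; move: hx; rewrite -(hTS x) hSx mulmx0 eqxx //.
move=> i; rewrite !qformE -!vnorm_sq.
set x := xs i; set B0 := prodA A (js i).
have hB0 : isProd A l B0 := isProd_prodA A (js i).
set rho := vnorm (S *m x).
have hrho : 0 <= rho by apply: vnorm_ge0.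
have hx : forall k B, isProd A k B -> vnorm (B *m x) <= lam ^+ k * rho.
  by move=> k B hB; rewrite -{1}(hTS x); apply: hT.
have [hr0|hrp] := eqVneq rho 0.
  have hSx : S *m x = 0 by apply: vnorm_eq0.
  have -> : x = 0 by rewrite -(hTS x) hSx mulmx0.
  rewrite !mulmx0 vnorm0 expr0n /=.
  by apply: mulr_ge0; [apply: exprn_ge0; exact: ltW hg0 | exact: sqr_ge0].
have hrp' : 0 < rho by rewrite lt_neqAle eq_sym hrp hrho.
have := hSv (B0 *m x) (lam ^+ l * rho) (mulr_gt0 (exprn_gt0 _ hlam0) hrp').
have hB : forall k B, isProd A k B -> vnorm (B *m (B0 *m x)) <= lam ^+ k * (lam ^+ l * rho).
  move=> k B hB; rewrite mulmxA mulrA -exprD.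
  exact: (hx _ _ (isProd_mul hB0 hB)).
move=> /(_ hB) h.
have hcl : c * (lam ^+ l * rho) = g ^+ l * rho.
  by rewrite /c mulrA -exprMn divfK // gt_eqF.
rewrite hcl in h.
rewrite mulnC exprM -exprMn; apply: lerXn2r => //.
- by rewrite nnegrE vnorm_ge0.
- by rewrite nnegrE mulr_ge0 // exprn_ge0 // ltW.
Qed.
End Final.

Unset Implicit Arguments.
Theorem theorem3 (R : realType) (n m l N : nat)
  (hn : (0 < n)%N) (hm : (0 < m)%N) (hl : (0 < l)%N) (hN : (0 < N)%N)
  (A : 'I_m -> 'M[R]_n)
  (xs : 'I_N -> 'cV[R]_n) (js : 'I_N -> ('I_l -> 'I_m))
  (hxs : forall i, xs i \in @sphere R n) :
  gamma_star A xs js / (n%:R `^ ((2 * l)%:R)^-1) <= jsr A.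
Proof.
have hN0 : 0 < n%:R `^ ((2 * l)%:R)^-1 :> R by rewrite powR_gt0 // ltr0n.
rewrite ler_pdivrMr //; apply/ler_addgt0Pr => e he.
have hf : feasible A xs js (jsr A * n%:R `^ ((2 * l)%:R)^-1 + e).
  by apply: feasible_of => //; rewrite ltrDl.
have hlb : has_lbound [set g | feasible A xs js g] by exists 0 => g [].
exact: (ge_inf hlb) hf.
Qed.
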